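(* Let $H$ be the lower Vietoris monad on $\mathbf{Top}$. For every topological space $X$, the equalizer of $\eta_{HX},H\eta_X:HX\to HHX$ is the subspace $DX\subseteq HX$ consisting of the irreducible closed subsets of $X$, with $\theta_X:DX\to HX$ the inclusion.
   Context: $HX$ is the set of closed subsets of $X$ (including $\emptyset$) with topology generated by the sets $\{C: C\cap U\neq\emptyset\}$ for $U\subseteq X$ open; $\eta_X(x)=\overline{\{x\}}$; $\mu_X(\mathcal{C})=\overline{\bigcup_{C\in\mathcal{C}}C}$; $Hf(C)=\overline{f(C)}$. A closed subset $C$ is irreducible if it is nonempty and is not the union of two closed proper subsets of $C$. *)

(* Defs.v *)
From HB Require Import structures.
From mathcomp Require Import all_boot all_order all_algebra.
From mathcomp Require Import all_classical all_reals all_analysis.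
Set Implicit Arguments. Unset Strict Implicit. Unset Printing Implicit Defensive.
Local Open Scope classical_set_scope.

(** The lower Vietoris space HX : closed subsets of X (including the empty set),
    topologized by the subbasis { C | C meets U }, U open in X. *)
Record hspace (X : topologicalType) := HSet {
  hval : set X;
  hval_closed : closed hval }.

Section LowerVietoris.
Variable X : topologicalType.

HB.instance Definition _ := gen_eqMixin (hspace X).
HB.instance Definition _ := gen_choiceMixin (hspace X).
HB.instance Definition _ := isPointed.Build (hspace X) (HSet (@closed0 X)).

Definition hsubbase (U : set X) : set (hspace X) :=
  [set C | hval C `&` U !=set0].

HB.instance Definition _ := isSubBaseTopological.Build (hspace X)
  (fun U : set X => open U) hsubbase.

Definition heta (x : X) : hspace X := HSet (@closed_closure X [set x]).

(** A closed set C is irreducible if nonempty and not the union of two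
    closed proper subsets of C (closed in C = closed in X, since C is closed). *)
Definition irreducible (C : set X) : Prop :=
  C !=set0 /\
  forall A B : set X, closed A -> closed B -> A `<=` C -> B `<=` C ->
    C = A `|` B -> A = C \/ B = C.

End LowerVietoris.

Definition hmap (X Y : topologicalType) (f : X -> Y) (C : hspace X) : hspace Y :=
  HSet (@closed_closure Y (f @` hval C)).

(** D X, the subspace of HX of irreducible closed subsets (as a subset of HX;
    the inclusion theta_X is the subspace inclusion). *)
Definition Dset (X : topologicalType) : set (hspace X) :=
  [set C | irreducible (hval C)].

(* Main.v *)
Require Import Defs.
From HB Require Import structures.
From mathcomp Require Import all_boot all_order all_algebra.
From mathcomp Require Import all_classical all_reals all_analysis.
From mathcomp Require Import finmap.
Local Open Scope classical_set_scope.
Set Implicit Arguments. Unset Strict Implicit.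
Lemma hspace_eq (Y : topologicalType) (A B : hspace Y) : hval A = hval B -> A = B.
Proof.
case: A B => a ca [b cb] /= eab; subst b; congr HSet; exact: Prop_irrelevance.
Qed.

Section S.
Variable X : topologicalType.
Lemma hopen_basic (O : set (hspace X)) (C : hspace X) : open O -> O C ->
  exists E : {fset set X}, (forall i, i \in E -> open i) /\
     (\bigcap_(i in [set` E]) hsubbase i) C /\ (\bigcap_(i in [set` E]) hsubbase i) `<=` O.
Proof.
move=> oO OC.
rewrite /open /= in oO.
case: oO => Ds sDs eO.
rewrite -eO in OC.
case: OC => B DsB BC; case: (sDs _ DsB) => E sE eB.
exists E; split; first by move=> i /sE /set_mem.
split; first by rewrite eB.
by rewrite eB -eO => D HD; exists B.
Qed.

Lemma hsubbase_open (U : set X) : open U -> open (hsubbase U).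
Proof.
move=> oU; rewrite /open /=.
exists [set hsubbase U].
  move=> _ ->; exists [fset U]%fset.
    by move=> i; rewrite inE => /eqP ->; apply/mem_set.
  rewrite eqEsubset; split=> D.
    by move=> H; apply: H => /=; rewrite inE.
  by move=> H i /=; rewrite inE => /eqP ->.
by rewrite bigcup_set1.
Qed.

Lemma hup (O : set (hspace X)) (D C : hspace X) : open O -> O D ->
  hval D `<=` hval C -> O C.
Proof.
move=> oO OD DC; have [E [_ [ED sO]]] := hopen_basic oO OD.
apply: sO => i Ei; have [x [Dx ix]] := ED i Ei.
by exists x; split => //; apply: DC.
Qed.

Lemma below_closure1 (D C : hspace X) : hval D `<=` hval C -> closure [set C] D.
Proof.
move=> DC B; rewrite nbhsE; case=> O [oO OD] OB.
by exists C; split => //; apply: OB; apply: (hup oO OD).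
Qed.


Lemma closure1_open (x y : X) (U : set X) : closure [set x] y -> open U -> U y -> U x.
Proof.
move=> cl oU Uy; have [z [-> //]] := cl U (open_nbhs_nbhs (conj oU Uy)).
Qed.

Lemma irr2 (C : set X) : closed C -> irreducible C -> forall U V : set X,
  open U -> open V -> C `&` U !=set0 -> C `&` V !=set0 -> C `&` (U `&` V) !=set0.
Proof.
move=> cC [_ irr] U V oU oV [u [Cu Uu]] [v [Cv Vv]].
apply: contrapT => nUV.
have cA : closed (C `&` ~` U) by apply: closedI => //; rewrite closedC.
have cB : closed (C `&` ~` V) by apply: closedI => //; rewrite closedC.
have eC : C = (C `&` ~` U) `|` (C `&` ~` V).
  rewrite eqEsubset; split => [x Cx|x [[]|[]] //].
  have [Ux|Ux] := pselect (U x); last by left.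
  have [Vx|Vx] := pselect (V x); last by right.
  by exfalso; apply: nUV; exists x.
have [eA|eB] := irr _ _ cA cB (@subIsetl _ _ _) (@subIsetl _ _ _) eC.
  by have [] : (C `&` ~` U) u by rewrite eA.
by have [] : (C `&` ~` V) v by rewrite eB.
Qed.

Lemma irr_fin (C : set X) : closed C -> irreducible C -> forall s : seq (set X),
  (forall i, i \in s -> open i /\ C `&` i !=set0) ->
  open [set x | forall i, i \in s -> i x] /\ C `&` [set x | forall i, i \in s -> i x] !=set0.
Proof.
move=> cC iC; elim => [_|a s IH H].
  split.
    have -> : [set x : X | forall i : set X, i \in [::] -> i x] = setT.
      by rewrite eqEsubset; split => // x _ i; rewrite in_nil.
    exact: openT.
  by case: iC.1 => x Cx; exists x; split => // i; rewrite in_nil.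
have [oS mS] : open [set x | forall i, i \in s -> i x] /\
      C `&` [set x | forall i, i \in s -> i x] !=set0.
  by apply: IH => i si; apply: H; rewrite in_cons si orbT.
have [oa ma] := H a (mem_head _ _).
have -> : [set x | forall i, i \in a :: s -> i x] = a `&` [set x | forall i, i \in s -> i x].
  rewrite eqEsubset; split => x.
    by move=> Hx; split; [apply: Hx; apply: mem_head | move=> i si; apply: Hx; rewrite in_cons si orbT].
  by case=> ax Hx i; rewrite in_cons => /orP [/eqP ->|/Hx].
split; first exact: openI.
exact: irr2.
Qed.

Lemma part1 (C : hspace X) :
  @heta (hspace X) C = hmap (@heta X) C <-> irreducible (hval C).
Proof.
split.
  move=> /(congr1 (@hval _)) /= e.
  have CC : closure [set heta x | x in hval C] C by rewrite -e; apply: subset_closure.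
  split.
    have [_ [[x Cx _] _]] := CC setT filterT.
    by exists x.
  move=> A B cA cB AC BC eC.
  apply: contrapT => /not_orP [nA nB].
  have [a [Ca nAa]] : exists a, hval C a /\ ~ A a.
    apply: contrapT => H; apply: nA; rewrite eqEsubset; split => // x Cx.
    by apply: contrapT => nx; apply: H; exists x.
  have [b [Cb nBb]] : exists b, hval C b /\ ~ B b.
    apply: contrapT => H; apply: nB; rewrite eqEsubset; split => // x Cx.
    by apply: contrapT => nx; apply: H; exists x.
  have oU : open (~` A) by rewrite openC.
  have oV : open (~` B) by rewrite openC.
  have oO : open (hsubbase (~` A) `&` hsubbase (~` B)).
    by apply: openI; apply: hsubbase_open.
  have OC : (hsubbase (~` A) `&` hsubbase (~` B)) C.
    by split; [exists a|exists b].
  have [_ [[x Cx <-] [[y [yx Uy]] [w [wx Vw]]]]] :=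
    CC _ (open_nbhs_nbhs (conj oO OC)).
  have Ux := closure1_open yx oU Uy.
  have Vx := closure1_open wx oV Vw.
  by move: Cx; rewrite eC; case.
move=> iC; apply: hspace_eq => /=.
have cC := @hval_closed _ C.
have sub1 : [set heta x | x in hval C] `<=` closure [set C].
  move=> _ [x Cx <-]; apply: below_closure1 => /=.
  by move=> y cy; apply: cC; apply: (closureS _ cy) => z ->.
have sub2 : [set C] `<=` closure [set heta x | x in hval C].
  move=> _ -> B; rewrite nbhsE; case=> O [oO OC] OB.
  have [E [oE [EC sO]]] := hopen_basic oO OC.
  have [_ [x [Cx Ex]]] := irr_fin cC iC (s := E) (fun i Ei => conj (oE i Ei) (EC i Ei)).
  exists (heta x); split; first by exists x.
  apply: OB; apply: sO => i Ei; exists x; split; last exact: Ex.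
  exact: subset_closure.
rewrite eqEsubset; split.
  by move=> y /(closureS sub2) cy; apply: closed_closure.
by move=> y /(closureS sub1) cy; apply: closed_closure.
Qed.
End S.
Unset Implicit Arguments.

Theorem theorem5p8 (X : topologicalType) :
  [set C : hspace X | @heta (hspace X) C = hmap (@heta X) C] = @Dset X /\
  (forall (Z : topologicalType) (f : Z -> hspace X), continuous f ->
     @heta (hspace X) \o f = hmap (@heta X) \o f ->
     exists! g : Z -> {C : hspace X | @Dset X C},
       continuous (fun z => (proj1_sig (g z) : subspace (@Dset X))) /\
       (fun z => proj1_sig (g z)) = f).
Proof.
have P1 : [set C : hspace X | @heta (hspace X) C = hmap (@heta X) C] = @Dset X.
  by rewrite eqEsubset; split => C /= /part1.
split => // Z f cf ef.
have Df : forall z, @Dset X (f z).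
  by move=> z; rewrite -P1 /=; exact: (congr1 (fun h => h z) ef).
exists (fun z => exist _ (f z) (Df z)); split.
  split => //.
  move=> z W /=.
  move=> nW.
  have nW' : within (@Dset X) (nbhs (f z)) W by rewrite (nbhs_subspace_in (Df z)).
  have h : nbhs z (f @^-1` [set y | @Dset X y -> W y]) := cf z _ nW'.
  by apply: (filterS _ h) => z' H; apply: H; exact: Df.
move=> g' [_ eg']; apply: funext => z.
move: (congr1 (fun h => h z) eg') => /=.
case: (g' z) => c pc /= ecf; subst c.
by congr exist; exact: Prop_irrelevance.
Qed.
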